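(* Assume $0<\underline{d}_w<\overline{d}_w\le L\cos(\underline{\theta}_w)<L/\cos(\underline{\theta}_w)$, where $\underline{\theta}_w\in(0,\pi/2)$, and consider $$\max_{P,d_w,\theta_w}\ \gamma_b(P,d_w,\theta_w)\quad\text{s.t.}\quad \mathcal{D}_{01}(P,d_w,\theta_w)\le2\epsilon^2,\ \ 0<P\le P_m,\ \ \underline{d}_w\le d_w\le\overline{d}_w,\ \ \underline{\theta}_w\le\theta_w\le\frac{\pi}{2}.$$ Let $\theta_w^\circ(\overline{d}_w)$ be the (unique) maximizer of $\theta_w\mapsto\gamma_b(P,\overline{d}_w,\theta_w)$ over $\theta_w\in[0,\pi/2]$ without constraints (it does not depend on $P>0$). Let $P^{\epsilon}$ be the unique value of $P$ with $\mathcal{D}_{01}(P,\overline{d}_w,\underline{\theta}_w)=2\epsilon^2$, let $\theta_w^{\epsilon}$ be the unique solution in $\theta_w$ of $\mathcal{D}_{01}(P_m,\overline{d}_w,\theta_w)=2\epsilon^2$, and let $(P^j,\theta_w^j)$ be the unique maximizer of $$\max_{P,\theta_w}\ \gamma_b(P,\overline{d}_w,\theta_w)\quad\text{s.t.}\quad \mathcal{D}_{01}(P,\overline{d}_w,\theta_w)=2\epsilon^2,\ \ P\le P_m,\ \ \max\{\underline{\theta}_w,\theta_w^{\epsilon}\}\le\theta_w\le\theta_w^\circ(\overline{d}_w).$$ Then the optimal solution $(d_w^\ast,\theta_w^\ast,P^\ast)$ of the original problem is: (A) $(\overline{d}_w,\underline{\theta}_w,P_m)$ if $\theta_w^\circ(\overline{d}_w)<\underline{\theta}_w$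 and $\mathcal{D}_{01}(P_m,\overline{d}_w,\underline{\theta}_w)\le2\epsilon^2$; (B) $(\overline{d}_w,\underline{\theta}_w,P^{\epsilon})$ if $\theta_w^\circ(\overline{d}_w)<\underline{\theta}_w$ and $\mathcal{D}_{01}(P_m,\overline{d}_w,\underline{\theta}_w)>2\epsilon^2$; (C) $(\overline{d}_w,\theta_w^\circ(\overline{d}_w),P_m)$ if $\underline{\theta}_w\le\theta_w^\circ(\overline{d}_w)\le\arccos(\overline{d}_w/L)$ and $\mathcal{D}_{01}(P_m,\overline{d}_w,\theta_w^\circ(\overline{d}_w))\le2\epsilon^2$; (D) $(\overline{d}_w,\theta_w^j,P^j)$ if $\underline{\theta}_w\le\theta_w^\circ(\overline{d}_w)\le\arccos(\overline{d}_w/L)$ and $\mathcal{D}_{01}(P_m,\overline{d}_w,\theta_w^\circ(\overline{d}_w))>2\epsilon^2$.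
   Context: Setting: Willie and Bob are ground points at distance $L>0$; a UAV lies in the vertical plane through them, on Bob's side, at distance $d_w>0$ from Willie and at elevation angle $\theta_w\in[0,\pi/2]$ (radians) seen from Willie, and transmits with power $P$. Constants: $\xi_{\mathrm{L}}<0$, $\xi_{\mathrm{N}}<0$; $a,b>0$; $\sigma_b^2,\sigma_w^2>0$; $n\in\mathbb{N}$; $\epsilon>0$; $P_m>0$. Define $d_b=\sqrt{L^2+d_w^2-2d_wL\cos(\theta_w)}$, $$p_b=\frac{1}{1+a\exp\!\left(-b\left[\frac{180}{\pi}\arcsin\!\left(\frac{d_w\sin\theta_w}{d_b}\right)-a\right]\right)},\qquad p_w=\frac{1}{1+a\exp\!\left(-b\left[\frac{180}{\pi}\theta_w-a\right]\right)},$$ $f(d_w,\theta_w)=d_b^{\xi_{\mathrm{L}}}p_b$, and $\gamma_b(P,d_w,\theta_w)=Pf(d_w,\theta_w)/\sigma_b^2$. With $\bar P=P d_w^{\xi_{\mathrm{L}}}p_w+P d_w^{\xi_{\mathrm{N}}}$, define $$\mathcal{D}_{01}(P,d_w,\theta_w)=\frac{n}{2}\left[\ln\!\left(\frac{\bar P+\sigma_w^2}{\sigma_w^2}\right)-\frac{\bar P}{\bar P+\sigma_w^2}\right].$$ *)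

(* Defs.v *)
From Stdlib Require Import Reals Lra.
Open Scope R_scope.

Definition rpow (d xi : R) : R := Rpower d xi.

Definition d_b (L dw thw : R) : R :=
  sqrt (L ^ 2 + dw ^ 2 - 2 * dw * L * cos thw).

(* LoS probabilities (angles converted to degrees). *)
Definition p_b (a b L dw thw : R) : R :=
  1 / (1 + a * exp (- b * (180 / PI * asin (dw * sin thw / d_b L dw thw) - a))).

Definition p_w (a b thw : R) : R :=
  1 / (1 + a * exp (- b * (180 / PI * thw - a))).

Definition f_gain (xiL a b L dw thw : R) : R :=
  rpow (d_b L dw thw) xiL * p_b a b L dw thw.

Definition gamma_b (xiL a b sb2 L P dw thw : R) : R :=
  P * f_gain xiL a b L dw thw / sb2.

Definition Pbar (xiL xiN a b P dw thw : R) : R :=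
  P * rpow dw xiL * p_w a b thw + P * rpow dw xiN.

Definition D01 (xiL xiN a b sw2 : R) (n : nat) (P dw thw : R) : R :=
  INR n / 2 *
  (ln ((Pbar xiL xiN a b P dw thw + sw2) / sw2)
   - Pbar xiL xiN a b P dw thw / (Pbar xiL xiN a b P dw thw + sw2)).

Definition feasible (xiL xiN a b sw2 : R) (n : nat) (eps Pm dl du thl : R)
  (P dw thw : R) : Prop :=
  D01 xiL xiN a b sw2 n P dw thw <= 2 * eps ^ 2 /\
  0 < P <= Pm /\ dl <= dw <= du /\ thl <= thw <= PI / 2.

Definition optimal (xiL xiN a b sb2 sw2 L : R) (n : nat) (eps Pm dl du thl : R)
  (P dw thw : R) : Prop :=
  feasible xiL xiN a b sw2 n eps Pm dl du thl P dw thw /\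
  forall P' dw' thw',
    feasible xiL xiN a b sw2 n eps Pm dl du thl P' dw' thw' ->
    gamma_b xiL a b sb2 L P' dw' thw' <= gamma_b xiL a b sb2 L P dw thw.

(* Main.v *)
Require Import Defs.
From Stdlib Require Import Reals.
From Stdlib Require Import Lra Psatz.
From Coquelicot Require Import Coquelicot.
Open Scope R_scope.

Lemma mono_deriv (f df : R -> R) (u v : R) :
  u <= v -> (forall x, u <= x <= v -> is_derive f x (df x)) ->
  (forall x, u <= x <= v -> 0 <= df x) -> f u <= f v.
Proof.
intros Huv Hd Hp.
destruct (Req_dec u v) as [->|Hne]; [lra|].
destruct (MVT_gen f u v df) as [c [Hc Heq]].
- intros x Hx. rewrite Rmin_left in Hx by lra. rewrite Rmax_right in Hx by lra.
  apply Hd; lra.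
- intros x Hx. rewrite Rmin_left in Hx by lra. rewrite Rmax_right in Hx by lra.
  assert (Hx' : derivable_pt_lim f x (df x)) by (apply is_derive_Reals; apply Hd; lra).
  exact (derivable_continuous_pt f x (exist _ (df x) Hx')).
- rewrite Rmin_left in Hc by lra. rewrite Rmax_right in Hc by lra.
  assert (0 <= df c) by (apply Hp; lra).
  assert (0 <= df c * (v - u)) by (apply Rmult_le_pos; lra). lra.
Qed.

Lemma anti_deriv (f df : R -> R) (u v : R) :
  u <= v -> (forall x, u <= x <= v -> is_derive f x (df x)) ->
  (forall x, u <= x <= v -> df x <= 0) -> f v <= f u.
Proof.
intros Huv Hd Hp.
assert (H := mono_deriv (fun x => - f x) (fun x => - df x) u v Huv).
assert (- f u <= - f v); [|lra].
apply H.
- intros x Hx. apply (is_derive_opp f x (df x)). now apply Hd.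
- intros x Hx. specialize (Hp x Hx). lra.
Qed.



Definition gfun (L du t : R) := du * sin t / (L - du * cos t).
Definition Efun (a b L du t : R) := exp (- b * (180/PI * atan (gfun L du t) - a)).
Definition r2f (L du t : R) := L^2 + du^2 - 2*du*L*cos t.
Definition Nf (xiL a b L du t : R) :=
  xiL * L * sin t + b * (180/PI) * (a * Efun a b L du t / (1 + a * Efun a b L du t)) * (L * cos t - du).
Definition Hf (xiL a b L du t : R) : R :=
  xiL * ln (r2f L du t) / 2 - ln (1 + a * Efun a b L du t).

Lemma r2f_pos L du t : 0 < du < L -> 0 < r2f L du t.
Proof.
intros H. unfold r2f. assert (Hc := COS_bound t).
assert (0 < L - du) by lra.
assert (0 <= du*L*(1 - cos t)) by (apply Rmult_le_pos; [apply Rmult_le_pos|]; lra).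
nra.
Qed.

Lemma den_pos L du t : 0 < du < L -> 0 < L - du * cos t.
Proof. intros H. assert (Hc := COS_bound t). nra. Qed.

Lemma Hf_deriv xiL a b L du t : 0 < du < L -> 0 < a ->
  is_derive (Hf xiL a b L du) t (du / r2f L du t * Nf xiL a b L du t).
Proof.
intros Hd Ha.
assert (Hr := r2f_pos L du t Hd). assert (Hn := den_pos L du t Hd).
assert (HE : 0 < Efun a b L du t) by apply exp_pos.
unfold Hf, Nf, Efun, gfun, r2f in *.
auto_derive.
{ repeat split; try lra.
  all: assert (Hx := exp_pos (- b * (180 / PI * atan (du * sin t * / (L + - (du * cos t))) + - a))); nra. }
assert (HE1 : exp (- b * (180 / PI * atan (du * sin t * / (L + - (du * cos t))) + - a)) = Efun a b L du t) by reflexivity.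
assert (HE2 : exp (- b * (180 / PI * atan (du * sin t / (L - du * cos t)) - a)) = Efun a b L du t) by reflexivity.
rewrite HE1, HE2.
set (c := cos t) in *. set (s := sin t) in *.
set (E := Efun a b L du t) in *.
assert (Hsc : s^2 + c^2 = 1).
{ unfold s, c. rewrite <- (sin2_cos2 t). unfold Rsqr. ring. }
assert (Hs2 : s^2 = 1 - c^2) by lra.
assert (Hq : (L + - (du*c))^2 + (du*s)^2 = L^2 + du^2 - 2*du*L*c).
{ replace ((du*s)^2) with (du^2 * s^2) by ring. rewrite Hs2. ring. }
assert (Hn' : L + - (du*c) <> 0) by lra.
assert (HPI : PI <> 0) by (apply Rgt_not_eq; apply PI_RGT_0).
assert (Hs3 : s^3 = s * (1 - c^2)) by (rewrite <- Hs2; ring).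
assert (Hs4 : s^4 = (1 - c^2)^2) by (rewrite <- Hs2; ring).
assert (HaE : 1 + a * E <> 0) by (apply Rgt_not_eq; rewrite HE2 in HE; nra).
field_simplify_eq.
- rewrite ?Hs4, ?Hs3, ?Hs2. ring.
- repeat split; try assumption; try lra.

Qed.

Lemma ln_sqrt' x : 0 < x -> ln (sqrt x) = ln x / 2.
Proof.
intros Hx. assert (Hs := sqrt_lt_R0 x Hx).
assert (ln x = ln (sqrt x * sqrt x)) by (rewrite sqrt_sqrt; lra).
rewrite H, ln_mult by assumption. lra.
Qed.

Lemma asin_eq L du t : 0 < du < L ->
  asin (du * sin t / d_b L du t) = atan (gfun L du t).
Proof.
intros Hd. assert (Hr := r2f_pos L du t Hd). assert (Hn := den_pos L du t Hd).
unfold r2f in Hr. unfold d_b, gfun.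
set (r := sqrt _). assert (Hrp : 0 < r) by (apply sqrt_lt_R0; lra).
assert (Hrr : r * r = L^2 + du^2 - 2*du*L*cos t) by (apply sqrt_sqrt; lra).
assert (Hsc : sin t ^2 + cos t ^2 = 1).
{ rewrite <- (sin2_cos2 t). unfold Rsqr. ring. }
assert (H1 : 1 - (du * sin t / r)² = ((L - du * cos t) / r)^2).
{ unfold Rsqr. field_simplify_eq; [|lra]. replace (r^2) with (r*r) by ring. rewrite Hrr.
  replace (sin t ^2) with (1 - cos t ^2) by lra. ring. }
assert (Hlt : (du * sin t / r)² < 1).
{ assert (0 < ((L - du * cos t) / r)^2).
  { apply pow_lt. apply Rdiv_lt_0_compat; lra. }
  lra. }
rewrite asin_atan.
- f_equal. rewrite H1. rewrite sqrt_pow2.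
  + field. split; lra.
  + apply Rlt_le, Rdiv_lt_0_compat; lra.
- assert (Habs : Rabs (du * sin t / r) < 1).
  { apply Rsqr_lt_abs_1 in Hlt ||
    (rewrite <- (Rabs_R1); apply Rsqr_lt_abs_0; unfold Rsqr in *; lra). }
  apply Rabs_def2 in Habs. lra.
Qed.

Lemma f_gain_exp xiL a b L du t : 0 < du < L -> 0 < a ->
  f_gain xiL a b L du t = exp (Hf xiL a b L du t).
Proof.
intros Hd Ha. assert (Hr := r2f_pos L du t Hd).
unfold f_gain, p_b, rpow, Rpower, Hf.
rewrite asin_eq by assumption.
fold (Efun a b L du t).
assert (HE : 0 < Efun a b L du t) by apply exp_pos.
unfold d_b. fold (r2f L du t). rewrite ln_sqrt' by assumption.
unfold Rminus. rewrite exp_plus, exp_Ropp, exp_ln by nra.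
replace (xiL * (ln (r2f L du t) / 2)) with (xiL * ln (r2f L du t) / 2) by field.
field. nra.
Qed.

Lemma cos_le' x y : 0 <= x -> x <= y -> y <= PI -> cos y <= cos x.
Proof.
intros. destruct (Req_dec x y) as [->|]; [lra|].
apply Rlt_le, cos_decreasing_1; lra.
Qed.

Lemma sin_le' x y : - (PI/2) <= x -> x <= y -> y <= PI/2 -> sin x <= sin y.
Proof.
intros. destruct (Req_dec x y) as [->|]; [lra|].
apply Rlt_le, sin_increasing_1; lra.
Qed.

Lemma exp_le' x y : x <= y -> exp x <= exp y.
Proof.
intros. destruct (Req_dec x y) as [->|]; [lra|].
apply Rlt_le, exp_increasing; lra.
Qed.

Lemma atan_le' x y : x <= y -> atan x <= atan y.
Proof.
intros. destruct (Req_dec x y) as [->|]; [lra|].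
apply Rlt_le, atan_increasing; lra.
Qed.

Lemma gfun_deriv L du x : 0 < du < L ->
  is_derive (gfun L du) x (du * (L * cos x - du) / (L - du * cos x)^2).
Proof.
intros Hd. assert (Hn := den_pos L du x Hd). unfold gfun.
auto_derive; [lra|].
assert (Hsc : sin x ^2 + cos x ^2 = 1).
{ rewrite <- (sin2_cos2 x). unfold Rsqr. ring. }
field_simplify_eq; [|lra].
replace (sin x ^2) with (1 - cos x ^2) by lra. ring.
Qed.

Lemma gfun_mono L du t1 t2 : 0 < du < L -> 0 <= t1 -> t1 <= t2 -> t2 <= PI/2 ->
  du <= L * cos t2 -> gfun L du t1 <= gfun L du t2.
Proof.
intros Hd H1 H2 H3 H4.
apply (mono_deriv _ (fun x => du * (L * cos x - du) / (L - du * cos x)^2) t1 t2 H2).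
- intros x _. apply gfun_deriv; assumption.
- intros x Hx. assert (Hn := den_pos L du x Hd).
  assert (cos t2 <= cos x) by (apply cos_le'; lra).
  apply Rmult_le_pos; [|apply Rlt_le, Rinv_0_lt_compat, pow_lt; lra].
  apply Rmult_le_pos; nra.
Qed.

Lemma q_anti a e1 e2 : 0 < a -> 0 < e1 -> e1 <= e2 ->
  a * e1 / (1 + a * e1) <= a * e2 / (1 + a * e2).
Proof.
intros.
assert (E : a * e2 / (1 + a * e2) - a * e1 / (1 + a * e1) = a * (e2 - e1) / ((1 + a*e1) * (1 + a*e2))) by (field; split; nra).
assert (0 <= a * (e2 - e1) / ((1 + a*e1) * (1 + a*e2))).
{ assert (0 < a*e1) by nra. assert (0 < a * e2) by nra. unfold Rdiv; apply Rmult_le_pos; [nra | apply Rlt_le, Rinv_0_lt_compat; apply Rmult_lt_0_compat; nra]. }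
lra.
Qed.

Lemma Nf_anti xiL a b L du t1 t2 : xiL < 0 -> 0 < a -> 0 < b -> 0 < du < L ->
  0 <= t1 -> t1 <= t2 -> t2 <= PI/2 -> du <= L * cos t2 ->
  Nf xiL a b L du t2 <= Nf xiL a b L du t1.
Proof.
intros HxiL Ha Hb Hd H1 H2 H3 H4. unfold Nf.
assert (HPI := PI_RGT_0).
assert (Hs : sin t1 <= sin t2) by (apply sin_le'; lra).
assert (Hc : cos t2 <= cos t1) by (apply cos_le'; lra).
assert (Hg := gfun_mono L du t1 t2 Hd H1 H2 H3 H4).
assert (HE : Efun a b L du t2 <= Efun a b L du t1).
{ unfold Efun. apply exp_le'. apply atan_le' in Hg.
  assert (0 < 180/PI) by (apply Rdiv_lt_0_compat; lra).
  assert (180/PI * atan (gfun L du t1) <= 180/PI * atan (gfun L du t2)) by (apply Rmult_le_compat_l; lra).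
  assert (b * (180/PI * atan (gfun L du t1) - a) <= b * (180/PI * atan (gfun L du t2) - a)) by (apply Rmult_le_compat_l; lra).
  lra. }
assert (HE2 : 0 < Efun a b L du t2) by apply exp_pos.
assert (Hq := q_anti a _ _ Ha HE2 HE).
assert (Hq0 : 0 <= a * Efun a b L du t2 / (1 + a * Efun a b L du t2)).
{ unfold Rdiv; apply Rmult_le_pos; [nra | apply Rlt_le, Rinv_0_lt_compat; nra]. }
set (q1 := a * Efun a b L du t1 / _) in *.
set (q2 := a * Efun a b L du t2 / _) in *.
assert (0 < b * (180/PI)) by (apply Rmult_lt_0_compat; [lra|apply Rdiv_lt_0_compat; lra]).
assert (L * cos t2 <= L * cos t1) by (apply Rmult_le_compat_l; lra).
assert (q2 * (L * cos t2 - du) <= q1 * (L * cos t1 - du)) by (apply Rmult_le_compat; lra).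
assert (xiL * L < 0) by nra.
assert (xiL * L * sin t2 <= xiL * L * sin t1) by (apply Rmult_le_compat_neg_l; lra).
assert (b * (180/PI) * (q2 * (L * cos t2 - du)) <= b * (180/PI) * (q1 * (L * cos t1 - du))) by (apply Rmult_le_compat_l; lra).
lra.
Qed.

Lemma Nf_neg xiL a b L du t : xiL < 0 -> 0 < a -> 0 < b -> 0 < du < L ->
  0 < t -> t <= PI/2 -> L * cos t < du -> Nf xiL a b L du t < 0.
Proof.
intros HxiL Ha Hb Hd H1 H2 H3. unfold Nf.
assert (HPI := PI_RGT_0).
assert (Hs : 0 < sin t) by (apply sin_gt_0; lra).
assert (HE2 : 0 < Efun a b L du t) by apply exp_pos.
assert (Hq0 : 0 <= a * Efun a b L du t / (1 + a * Efun a b L du t)).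
{ unfold Rdiv; apply Rmult_le_pos; [nra | apply Rlt_le, Rinv_0_lt_compat; nra]. }
set (q := a * Efun a b L du t / _) in *.
assert (0 < b * (180/PI)) by (apply Rmult_lt_0_compat; [lra|apply Rdiv_lt_0_compat; lra]).
assert (0 <= b * (180/PI) * q) by nra.
assert (xiL * L * sin t < 0).
{ assert (xiL * L < 0) by nra. nra. }
nra.
Qed.

Lemma Hf_three xiL a b L du t1 t2 t3 : xiL < 0 -> 0 < a -> 0 < b -> 0 < du < L ->
  0 <= t1 -> t1 <= t2 -> t2 <= t3 -> t3 <= PI/2 ->
  Hf xiL a b L du t1 <= Hf xiL a b L du t2 \/ Hf xiL a b L du t3 <= Hf xiL a b L du t2.
Proof.
intros HxiL Ha Hb Hd H1 H2 H3 H4.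
assert (Hder := fun x => Hf_deriv xiL a b L du x Hd Ha).
destruct (Rle_lt_dec 0 (Nf xiL a b L du t2)) as [Hp|Hn].
- left. destruct (Req_dec t1 t2) as [->|Hne]; [lra|].
  assert (Hc : du <= L * cos t2).
  { destruct (Rle_lt_dec du (L * cos t2)) as [|Hlt]; [assumption|].
    assert (Nf xiL a b L du t2 < 0) by (apply Nf_neg; lra). lra. }
  apply (mono_deriv _ (fun x => du / r2f L du x * Nf xiL a b L du x) t1 t2 H2).
  + intros x _. apply Hder.
  + intros x Hx. assert (Hr := r2f_pos L du x Hd).
    assert (Nf xiL a b L du t2 <= Nf xiL a b L du x) by (apply Nf_anti; lra).
    apply Rmult_le_pos; [apply Rlt_le, Rdiv_lt_0_compat|]; lra.
- right.
  apply (anti_deriv _ (fun x => du / r2f L du x * Nf xiL a b L du x) t2 t3 H3).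
  + intros x _. apply Hder.
  + intros x Hx. assert (Hr := r2f_pos L du x Hd).
    assert (Nf xiL a b L du x < 0).
    { destruct (Req_dec x t2) as [->|Hne]; [lra|].
      destruct (Rle_lt_dec du (L * cos x)) as [Hc|Hc].
      - assert (Nf xiL a b L du x <= Nf xiL a b L du t2) by (apply Nf_anti; lra). lra.
      - apply Nf_neg; lra. }
    assert (0 < du / r2f L du x) by (apply Rdiv_lt_0_compat; lra).
    nra.
Qed.

Lemma exp_le_inv x y : exp x <= exp y -> x <= y.
Proof.
intros H. destruct (Rle_lt_dec x y); [assumption|].
assert (exp y < exp x) by (apply exp_increasing; lra). lra.
Qed.

(* unimodality consequences for F = f_gain on the circle dw = du *)
Lemma F_right xiL a b L du tO t2 t3 : xiL < 0 -> 0 < a -> 0 < b -> 0 < du < L ->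
  0 <= tO -> tO <= t2 -> t2 <= t3 -> t3 <= PI/2 ->
  f_gain xiL a b L du t3 <= f_gain xiL a b L du tO ->
  f_gain xiL a b L du t3 <= f_gain xiL a b L du t2.
Proof.
intros. rewrite !f_gain_exp in * by lra.
apply exp_le_inv in H7. apply exp_le'.
destruct (Hf_three xiL a b L du tO t2 t3); lra.
Qed.

Lemma F_left xiL a b L du t1 t2 tO : xiL < 0 -> 0 < a -> 0 < b -> 0 < du < L ->
  0 <= t1 -> t1 <= t2 -> t2 <= tO -> tO <= PI/2 ->
  f_gain xiL a b L du t1 <= f_gain xiL a b L du tO ->
  f_gain xiL a b L du t1 <= f_gain xiL a b L du t2.
Proof.
intros. rewrite !f_gain_exp in * by lra.
apply exp_le_inv in H7. apply exp_le'.
destruct (Hf_three xiL a b L du t1 t2 tO); lra.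
Qed.

Lemma sq_le x y : 0 <= y -> x^2 <= y^2 -> x <= y.
Proof. intros. destruct (Rle_lt_dec x y); [assumption|]. nra. Qed.

Lemma asin_le' x y : -1 <= x -> x <= y -> y <= 1 -> asin x <= asin y.
Proof.
intros. destruct (Rle_lt_dec (asin x) (asin y)) as [|Hlt]; [assumption|].
assert (Bx := asin_bound x). assert (By := asin_bound y).
assert (sin (asin y) < sin (asin x)) by (apply sin_increasing_1; lra).
rewrite !sin_asin in H2 by lra. lra.
Qed.

Lemma ln_le' x y : 0 < x -> x <= y -> ln x <= ln y.
Proof.
intros. destruct (Req_dec x y) as [->|]; [lra|].
apply Rlt_le, ln_increasing; lra.
Qed.

Lemma dom xiL a b L dw1 t1 dw2 t2 : xiL < 0 -> 0 < a -> 0 < b ->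
  0 < d_b L dw2 t2 -> d_b L dw2 t2 <= d_b L dw1 t1 ->
  -1 <= dw1 * sin t1 / d_b L dw1 t1 ->
  dw1 * sin t1 / d_b L dw1 t1 <= dw2 * sin t2 / d_b L dw2 t2 ->
  dw2 * sin t2 / d_b L dw2 t2 <= 1 ->
  f_gain xiL a b L dw1 t1 <= f_gain xiL a b L dw2 t2.
Proof.
intros HxiL Ha Hb Hr Hrr Hs1 Hs Hs2.
unfold f_gain, p_b, rpow, Rpower.
assert (HPI := PI_RGT_0).
apply Rmult_le_compat.
- apply Rlt_le, exp_pos.
- assert (0 < exp (- b * (180 / PI * asin (dw1 * sin t1 / d_b L dw1 t1) - a))) by apply exp_pos.
  unfold Rdiv; rewrite Rmult_1_l; apply Rlt_le, Rinv_0_lt_compat; nra.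
- apply exp_le'. assert (ln (d_b L dw2 t2) <= ln (d_b L dw1 t1)) by (apply ln_le'; lra).
  apply Rmult_le_compat_neg_l; lra.
- assert (HA := asin_le' _ _ Hs1 Hs Hs2).
  set (A1 := asin (dw1 * sin t1 / d_b L dw1 t1)) in *.
  set (A2 := asin (dw2 * sin t2 / d_b L dw2 t2)) in *.
  assert (HE : exp (- b * (180 / PI * A2 - a)) <= exp (- b * (180 / PI * A1 - a))).
  { apply exp_le'.
    assert (0 < 180/PI) by (apply Rdiv_lt_0_compat; lra).
    assert (180/PI * A1 <= 180/PI * A2) by (apply Rmult_le_compat_l; lra).
    assert (b * (180/PI * A1 - a) <= b * (180/PI * A2 - a)) by (apply Rmult_le_compat_l; lra).
    lra. }
  assert (0 < exp (- b * (180 / PI * A2 - a))) by apply exp_pos.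
  assert (0 < a * exp (- b * (180 / PI * A2 - a))) by (apply Rmult_lt_0_compat; lra).
  unfold Rdiv; rewrite !Rmult_1_l. apply Rinv_le_contravar; [lra|].
  apply Rplus_le_compat_l. apply Rmult_le_compat_l; lra.
Qed.

Lemma db_sq L dw t : (d_b L dw t)^2 = (L - dw * cos t)^2 + (dw * sin t)^2.
Proof.
unfold d_b. rewrite pow2_sqrt.
- assert (Hsc : sin t ^2 + cos t ^2 = 1) by (rewrite <- (sin2_cos2 t); unfold Rsqr; ring).
  replace ((dw * sin t)^2) with (dw^2 * sin t ^2) by ring.
  replace (sin t ^2) with (1 - cos t^2) by lra. ring.
- assert (Hsc : sin t ^2 + cos t ^2 = 1) by (rewrite <- (sin2_cos2 t); unfold Rsqr; ring).
  replace (L ^ 2 + dw ^ 2 - 2 * dw * L * cos t) with ((L - dw * cos t)^2 + dw^2 * sin t ^2).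
  + assert (0 <= (L - dw * cos t)^2) by apply pow2_ge_0. assert (0 <= dw^2 * sin t ^2) by (apply Rmult_le_pos; apply pow2_ge_0). lra.
  + replace (sin t ^2) with (1 - cos t^2) by lra. ring.
Qed.

Lemma db_pos L dw t : 0 <= dw < L -> 0 < d_b L dw t.
Proof.
intros H. assert (Hc := COS_bound t).
assert (dw * cos t <= dw * 1) by (apply Rmult_le_compat_l; lra).
assert (0 < L - dw * cos t) by lra.
assert (Hp : 0 < (d_b L dw t)^2).
{ rewrite db_sq. assert (0 < (L - dw * cos t)^2) by (apply pow_lt; lra).
  assert (0 <= (dw * sin t)^2) by apply pow2_ge_0. lra. }
assert (0 <= d_b L dw t) by apply sqrt_pos.
destruct (Req_dec (d_b L dw t) 0) as [E|]; [rewrite E in Hp; lra | lra].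
Qed.

Lemma s_bounds L dw t : 0 <= dw < L -> 0 <= t <= PI ->
  0 <= dw * sin t / d_b L dw t <= 1.
Proof.
intros H Ht. assert (Hr := db_pos L dw t H).
assert (Hs : 0 <= sin t) by (apply sin_ge_0; lra).
split.
- apply Rmult_le_pos; [nra|]. apply Rlt_le, Rinv_0_lt_compat; lra.
- apply Rmult_le_reg_r with (d_b L dw t); [lra|].
  unfold Rdiv. rewrite Rmult_assoc, Rinv_l, Rmult_1_r, Rmult_1_l by lra.
  apply sq_le; [lra|]. rewrite db_sq. assert (0 <= (L - dw * cos t)^2) by apply pow2_ge_0. lra.
Qed.

Lemma near_bound xiL a b L du dw t : xiL < 0 -> 0 < a -> 0 < b -> 0 < du < L ->
  0 < dw <= du -> 0 <= t <= PI/2 -> du <= L * cos t ->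
  f_gain xiL a b L dw t <= f_gain xiL a b L du t.
Proof.
intros HxiL Ha Hb Hd Hdw Ht Hc.
assert (HPI := PI_RGT_0).
assert (Hr1 := db_pos L dw t ltac:(lra)). assert (Hr2 := db_pos L du t ltac:(lra)).
assert (Hs : 0 <= sin t) by (apply sin_ge_0; lra).
assert (Hle : d_b L du t <= d_b L dw t).
{ apply sq_le; [lra|]. rewrite !db_sq.
  assert (Hsc : sin t ^2 + cos t ^2 = 1) by (rewrite <- (sin2_cos2 t); unfold Rsqr; ring).
  assert (0 <= cos t) by (apply cos_ge_0; lra).
  assert (E1 : forall d, (L - d * cos t)^2 + (d * sin t)^2 = L^2 + d^2 - 2*d*L*cos t).
  { intros d. replace ((d * sin t)^2) with (d^2 * sin t ^2) by ring.
    replace (sin t ^2) with (1 - cos t^2) by lra. ring. }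
  rewrite !E1. nra. }
assert (B1 := s_bounds L dw t ltac:(lra) ltac:(lra)).
assert (B2 := s_bounds L du t ltac:(lra) ltac:(lra)).
apply dom; try lra.
apply Rmult_le_reg_r with (d_b L dw t * d_b L du t); [nra|].
field_simplify; try lra.
assert (dw * sin t * d_b L du t <= du * sin t * d_b L dw t).
{ apply Rmult_le_compat; try nra. }
lra.
Qed.

Lemma tt_props L du : 0 < du < L ->
  0 <= acos (du / L) < PI / 2 /\ cos (acos (du/L)) = du / L /\
  sin (acos (du/L)) = sqrt (L^2 - du^2) / L.
Proof.
intros Hd. assert (HPI := PI_RGT_0).
assert (Hq : 0 < du / L < 1).
{ split; [apply Rdiv_lt_0_compat; lra|]. apply Rmult_lt_reg_r with L; [lra|].
  unfold Rdiv. rewrite Rmult_assoc, Rinv_l; lra. }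
assert (Hc : cos (acos (du/L)) = du/L) by (apply cos_acos; lra).
assert (Hb := acos_bound (du/L)).
split; [|split; [assumption|]].
- split; [lra|]. destruct (Rlt_le_dec (acos (du/L)) (PI/2)) as [|Hge]; [assumption|].
  destruct (Req_dec (acos (du/L)) (PI/2)) as [E|].
  + rewrite E, cos_PI2 in Hc. lra.
  + assert (Hcc : cos (acos (du/L)) < cos (PI/2)) by (apply cos_decreasing_1; lra).
    rewrite cos_PI2 in Hcc. lra.
- rewrite sin_acos by lra.
  assert (0 <= L^2 - du^2) by nra.
  replace (1 - (du/L)²) with ((sqrt (L^2 - du^2) / L)^2).
  + rewrite sqrt_pow2; [reflexivity|].
    apply Rmult_le_pos; [apply sqrt_pos| apply Rlt_le, Rinv_0_lt_compat; lra].
  + unfold Rsqr. unfold Rdiv. rewrite Rpow_mult_distr, pow2_sqrt by assumption.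
    field. lra.
Qed.

Lemma far_bound xiL a b L du dw t : xiL < 0 -> 0 < a -> 0 < b -> 0 < du < L ->
  0 < dw <= du -> 0 <= t <= PI/2 -> L * cos t < du ->
  f_gain xiL a b L dw t <= f_gain xiL a b L du (acos (du / L)).
Proof.
intros HxiL Ha Hb Hd Hdw Ht Hc.
destruct (tt_props L du Hd) as [Htt [Hct Hst]].
set (tt := acos (du/L)) in *.
assert (HPI := PI_RGT_0).
assert (Hr1 := db_pos L dw t ltac:(lra)). assert (Hr2 := db_pos L du tt ltac:(lra)).
assert (Hs : 0 <= sin t) by (apply sin_ge_0; lra).
assert (Hcp : 0 <= cos t) by (apply cos_ge_0; lra).
assert (Hsc : sin t ^2 + cos t ^2 = 1) by (rewrite <- (sin2_cos2 t); unfold Rsqr; ring).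
assert (HLdu : 0 <= L^2 - du^2) by nra.
assert (Hsq := sqrt_pos (L^2 - du^2)).
assert (Hsq2 := pow2_sqrt (L^2 - du^2) HLdu).
assert (Edb : d_b L du tt = sqrt (L^2 - du^2)).
{ apply Rsqr_inj; [lra|lra|]. unfold Rsqr. rewrite <- !Rpow_mult_distr ||
    (replace (d_b L du tt * d_b L du tt) with ((d_b L du tt)^2) by ring;
     replace (sqrt (L ^ 2 - du ^ 2) * sqrt (L ^ 2 - du ^ 2)) with ((sqrt (L ^ 2 - du ^ 2))^2) by ring).
  rewrite db_sq, Hsq2, Hct, Hst.
  replace ((du * (sqrt (L ^ 2 - du ^ 2) / L)) ^ 2) with (du^2 * (sqrt (L ^ 2 - du ^ 2))^2 / L^2) by (field; lra).
  rewrite Hsq2. field. lra. }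
assert (Est : du * sin tt / d_b L du tt = du / L).
{ rewrite Edb, Hst. field. split; [lra|].
  intro E0. assert (L^2 - du^2 = 0) by (rewrite <- Hsq2, E0; ring). nra. }
assert (B1 := s_bounds L dw t ltac:(lra) ltac:(lra)).
assert (Hq : du / L <= 1).
{ apply Rmult_le_reg_r with L; [lra|]. unfold Rdiv. rewrite Rmult_assoc, Rinv_l; lra. }
apply dom; try lra.
-
  rewrite Edb. apply sq_le; [lra|]. rewrite db_sq, Hsq2.
  replace ((dw * sin t)^2) with (dw^2 * sin t^2) by ring.
  replace (sin t ^2) with (1 - cos t^2) by lra.
  assert (0 <= L * cos t) by (apply Rmult_le_pos; lra).
  assert ((L * cos t)^2 < du^2) by nra.
  assert (0 <= (dw - L * cos t)^2) by apply pow2_ge_0.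
  nra.
- rewrite Est.
  apply Rmult_le_reg_r with (d_b L dw t * L); [nra|].
  replace (dw * sin t / d_b L dw t * (d_b L dw t * L)) with (dw * sin t * L) by (field; lra).
  replace (du / L * (d_b L dw t * L)) with (du * d_b L dw t) by (field; lra).
  apply sq_le; [nra|].
  replace ((du * d_b L dw t)^2) with (du^2 * (d_b L dw t)^2) by ring.
  rewrite db_sq.
  set (x := dw * cos t). set (y := dw * sin t).
  assert (Hxy : x^2 + y^2 = dw^2) by (unfold x, y; nra).
  assert (Hy2 : y^2 <= du^2 - x^2) by nra.
  assert (y^2 * (L^2 - du^2) <= (du^2 - x^2) * (L^2 - du^2)) by (apply Rmult_le_compat_r; lra).
  assert (0 <= (du^2 - x * L)^2) by apply pow2_ge_0.
  nra.
Qed.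

Lemma circle_bound xiL a b L du dw t : xiL < 0 -> 0 < a -> 0 < b -> 0 < du < L ->
  0 < dw <= du -> 0 <= t <= PI/2 ->
  exists te, 0 <= te <= t /\ (te = t \/ te = acos (du / L)) /\
    f_gain xiL a b L dw t <= f_gain xiL a b L du te.
Proof.
intros HxiL Ha Hb Hd Hdw Ht.
destruct (Rle_lt_dec du (L * cos t)) as [Hc|Hc].
- exists t. split; [lra|]. split; [now left|]. apply near_bound; lra.
- exists (acos (du/L)). destruct (tt_props L du Hd) as [Htt [Hct Hst]].
  assert (HPI := PI_RGT_0).
  assert (acos (du/L) < t).
  { apply (cos_decreasing_0 t (acos (du/L))); try lra.
    rewrite Hct. apply Rmult_lt_reg_l with L; [lra|].
    unfold Rdiv. rewrite <- Rmult_assoc, (Rmult_comm L du), Rmult_assoc, Rinv_r; lra. }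
  split; [lra|]. split; [now right|]. apply far_bound; lra.
Qed.

Lemma tt_ge L du thl : 0 < du < L -> 0 <= thl <= PI/2 -> du <= L * cos thl ->
  thl <= acos (du / L).
Proof.
intros Hd Ht Hc. destruct (tt_props L du Hd) as [Htt [Hct Hst]].
destruct (Rle_lt_dec thl (acos (du/L))) as [|Hlt]; [assumption|].
assert (HPI := PI_RGT_0).
assert (cos thl < cos (acos (du/L))) by (apply cos_decreasing_1; lra).
rewrite Hct in H.
assert (L * cos thl < L * (du / L)) by (apply Rmult_lt_compat_l; lra).
replace (L * (du/L)) with du in H0 by (field; lra). lra.
Qed.

Definition Gs (s p : R) := ln ((p + s) / s) - p / (p + s).

Lemma ln_ge t : 0 < t -> 1 - / t <= ln t.
Proof.
intros Ht. assert (H := exp_ineq1_le (- ln t)).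
rewrite exp_Ropp, exp_ln in H by assumption. lra.
Qed.

Lemma Gs_diff s p q : 0 < s -> 0 <= p -> p <= q ->
  p * (q - p) / ((q + s) * (p + s)) <= Gs s q - Gs s p.
Proof.
intros Hs Hp Hq. unfold Gs.
assert (E : ln ((q + s) / s) = ln ((q + s) / (p + s)) + ln ((p + s) / s)).
{ rewrite <- ln_mult.
  - f_equal. field. lra.
  - apply Rdiv_lt_0_compat; lra.
  - apply Rdiv_lt_0_compat; lra. }
rewrite E.
assert (Hl := ln_ge ((q + s) / (p + s)) ltac:(apply Rdiv_lt_0_compat; lra)).
replace (/ ((q + s) / (p + s))) with ((p + s) / (q + s)) in Hl by (field; lra).
assert (p * (q - p) / ((q + s) * (p + s)) = 1 - (p + s) / (q + s) - q / (q + s) + p / (p + s))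
  by (field; lra).
lra.
Qed.

Lemma Gs_mono s p q : 0 < s -> 0 <= p -> p <= q -> Gs s p <= Gs s q.
Proof.
intros. assert (H2 := Gs_diff s p q H H0 H1).
assert (0 <= p * (q - p) / ((q + s) * (p + s))).
{ unfold Rdiv. apply Rmult_le_pos; [nra|]. apply Rlt_le, Rinv_0_lt_compat. nra. }
lra.
Qed.

Lemma Gs_strict s p q : 0 < s -> 0 < p -> p < q -> Gs s p < Gs s q.
Proof.
intros. assert (H2 := Gs_diff s p q H ltac:(lra) ltac:(lra)).
assert (0 < p * (q - p) / ((q + s) * (p + s))).
{ apply Rdiv_lt_0_compat; nra. }
lra.
Qed.

Lemma D01_Gs xiL xiN a b sw2 n P dw t :
  D01 xiL xiN a b sw2 n P dw t = INR n / 2 * Gs sw2 (Pbar xiL xiN a b P dw t).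
Proof. reflexivity. Qed.

Definition hf (xiL xiN a b dw t : R) := rpow dw xiL * p_w a b t + rpow dw xiN.

Lemma Pbar_hf xiL xiN a b P dw t : Pbar xiL xiN a b P dw t = P * hf xiL xiN a b dw t.
Proof. unfold Pbar, hf. ring. Qed.

Lemma p_w_pos a b t : 0 < a -> 0 < p_w a b t.
Proof.
intros. unfold p_w. assert (0 < exp (- b * (180 / PI * t - a))) by apply exp_pos.
unfold Rdiv. rewrite Rmult_1_l. apply Rinv_0_lt_compat. nra.
Qed.

Lemma p_w_mono a b t1 t2 : 0 < a -> 0 < b -> t1 <= t2 -> p_w a b t1 <= p_w a b t2.
Proof.
intros Ha Hb Ht. unfold p_w. assert (HPI := PI_RGT_0).
assert (HE : exp (- b * (180 / PI * t2 - a)) <= exp (- b * (180 / PI * t1 - a))).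
{ apply exp_le'.
  assert (0 < 180/PI) by (apply Rdiv_lt_0_compat; lra).
  assert (180/PI * t1 <= 180/PI * t2) by (apply Rmult_le_compat_l; lra).
  assert (b * (180/PI * t1 - a) <= b * (180/PI * t2 - a)) by (apply Rmult_le_compat_l; lra).
  lra. }
assert (0 < exp (- b * (180 / PI * t2 - a))) by apply exp_pos.
assert (0 < a * exp (- b * (180 / PI * t2 - a))) by (apply Rmult_lt_0_compat; lra).
unfold Rdiv; rewrite !Rmult_1_l. apply Rinv_le_contravar; [lra|].
apply Rplus_le_compat_l. apply Rmult_le_compat_l; lra.
Qed.

Lemma rpow_pos x xi : 0 < rpow x xi.
Proof. unfold rpow, Rpower. apply exp_pos. Qed.

Lemma rpow_anti x y xi : xi < 0 -> 0 < x -> x <= y -> rpow y xi <= rpow x xi.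
Proof.
intros. unfold rpow, Rpower. apply exp_le'.
assert (ln x <= ln y) by (apply ln_le'; lra).
apply Rmult_le_compat_neg_l; lra.
Qed.

Lemma hf_pos xiL xiN a b dw t : 0 < a -> 0 < hf xiL xiN a b dw t.
Proof.
intros. unfold hf. assert (H1 := rpow_pos dw xiL). assert (H2 := rpow_pos dw xiN).
assert (H3 := p_w_pos a b t H). nra.
Qed.

Lemma hf_mono xiL xiN a b dw1 t1 dw2 t2 : xiL < 0 -> xiN < 0 -> 0 < a -> 0 < b ->
  0 < dw2 -> dw2 <= dw1 -> t1 <= t2 ->
  hf xiL xiN a b dw1 t1 <= hf xiL xiN a b dw2 t2.
Proof.
intros. unfold hf.
assert (rpow dw1 xiL <= rpow dw2 xiL) by (apply rpow_anti; lra).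
assert (rpow dw1 xiN <= rpow dw2 xiN) by (apply rpow_anti; lra).
assert (p_w a b t1 <= p_w a b t2) by (apply p_w_mono; lra).
assert (H9 := p_w_pos a b t1 H1). assert (H10 := rpow_pos dw1 xiL).
apply Rplus_le_compat; [|lra]. apply Rmult_le_compat; lra.
Qed.

Lemma f_pos xiL a b L dw t : 0 < a -> 0 < f_gain xiL a b L dw t.
Proof.
intros Ha. unfold f_gain, p_b. apply Rmult_lt_0_compat; [apply rpow_pos|].
set (e := exp _). assert (0 < e) by apply exp_pos.
unfold Rdiv. rewrite Rmult_1_l. apply Rinv_0_lt_compat. nra.
Qed.

Theorem proposition1
  (xiL xiN a b sb2 sw2 : R) (n : nat) (eps Pm L dl du thl thO : R)
  (HxiL : xiL < 0) (HxiN : xiN < 0) (Ha : 0 < a) (Hb : 0 < b)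
  (Hsb2 : 0 < sb2) (Hsw2 : 0 < sw2) (Heps : 0 < eps) (HPm : 0 < Pm) (HL : 0 < L)
  (Hthl : 0 < thl < PI / 2)
  (Hd : 0 < dl /\ dl < du /\ du <= L * cos thl /\ L * cos thl < L / cos thl)
  (* thO = theta_w^o(du): the unique unconstrained maximizer over [0, pi/2],
     independent of P > 0 *)
  (HthO_dom : 0 <= thO <= PI / 2)
  (HthO_max : forall P, 0 < P -> forall th, 0 <= th <= PI / 2 ->
      gamma_b xiL a b sb2 L P du th <= gamma_b xiL a b sb2 L P du thO)
  (HthO_uniq : forall P, 0 < P -> forall th, 0 <= th <= PI / 2 ->
      (forall th', 0 <= th' <= PI / 2 ->
         gamma_b xiL a b sb2 L P du th' <= gamma_b xiL a b sb2 L P du th) ->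
      th = thO) :
  (* (A) *)
  (thO < thl ->
   D01 xiL xiN a b sw2 n Pm du thl <= 2 * eps ^ 2 ->
   optimal xiL xiN a b sb2 sw2 L n eps Pm dl du thl Pm du thl) /\
  (* (B) *)
  (forall Peps : R,
   0 < Peps -> D01 xiL xiN a b sw2 n Peps du thl = 2 * eps ^ 2 ->
   (forall P, 0 < P -> D01 xiL xiN a b sw2 n P du thl = 2 * eps ^ 2 -> P = Peps) ->
   thO < thl ->
   D01 xiL xiN a b sw2 n Pm du thl > 2 * eps ^ 2 ->
   optimal xiL xiN a b sb2 sw2 L n eps Pm dl du thl Peps du thl) /\
  (* (C) *)
  (thl <= thO <= acos (du / L) ->
   D01 xiL xiN a b sw2 n Pm du thO <= 2 * eps ^ 2 ->
   optimal xiL xiN a b sb2 sw2 L n eps Pm dl du thl Pm du thO) /\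
  (* (D) *)
  (forall thEps Pj thj : R,
   D01 xiL xiN a b sw2 n Pm du thEps = 2 * eps ^ 2 ->
   (forall th, D01 xiL xiN a b sw2 n Pm du th = 2 * eps ^ 2 -> th = thEps) ->
   (* (Pj, thj) is the unique maximizer of the reduced problem *)
   let feas2 := fun P th =>
     D01 xiL xiN a b sw2 n P du th = 2 * eps ^ 2 /\ P <= Pm /\
     Rmax thl thEps <= th <= thO in
   feas2 Pj thj ->
   (forall P th, feas2 P th ->
      gamma_b xiL a b sb2 L P du th <= gamma_b xiL a b sb2 L Pj du thj) ->
   (forall P th, feas2 P th ->
      (forall P' th', feas2 P' th' ->
         gamma_b xiL a b sb2 L P' du th' <= gamma_b xiL a b sb2 L P du th) ->
      P = Pj /\ th = thj) ->
   thl <= thO <= acos (du / L) ->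
   D01 xiL xiN a b sw2 n Pm du thO > 2 * eps ^ 2 ->
   optimal xiL xiN a b sb2 sw2 L n eps Pm dl du thl Pj du thj).
Proof.
assert (HPI := PI_RGT_0).
destruct Hd as [Hdl [Hdlu [Hdu Hcos]]].
assert (Hc1 : cos thl < 1) by (rewrite <- cos_0; apply cos_decreasing_1; lra).
assert (HdL : 0 < du < L) by (split; [lra|]; nra).
assert (Htt : thl <= acos (du / L)) by (apply tt_ge; lra).
assert (Httb := tt_props L du HdL).
assert (Hc : 0 < 2 * eps ^ 2) by (assert (0 < eps^2) by (apply pow_lt; lra); lra).
assert (HF : forall t, 0 <= t <= PI/2 -> f_gain xiL a b L du t <= f_gain xiL a b L du thO).
{ intros t Ht. assert (Hg := HthO_max 1 ltac:(lra) t Ht). unfold gamma_b in Hg.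
  apply Rmult_le_reg_r with (/ sb2); [apply Rinv_0_lt_compat; lra|]. lra. }
assert (Hfeas : forall P' dw' t', feasible xiL xiN a b sw2 n eps Pm dl du thl P' dw' t' ->
  exists te, 0 <= te <= t' /\ thl <= te /\ f_gain xiL a b L dw' t' <= f_gain xiL a b L du te).
{ intros P' dw' t' [_ [_ [Hd' Ht']]].
  destruct (circle_bound xiL a b L du dw' t' HxiL Ha Hb HdL ltac:(lra) ltac:(lra)) as [te [Hte [Hor Hle]]].
  exists te. split; [lra|]. split; [destruct Hor as [->| ->]; lra|assumption]. }
assert (Hgam : forall P1 dw1 t1 P2 dw2 t2,
  P1 * f_gain xiL a b L dw1 t1 <= P2 * f_gain xiL a b L dw2 t2 ->
  gamma_b xiL a b sb2 L P1 dw1 t1 <= gamma_b xiL a b sb2 L P2 dw2 t2).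
{ intros. unfold gamma_b. unfold Rdiv. apply Rmult_le_compat_r; [apply Rlt_le, Rinv_0_lt_compat; lra|lra]. }
assert (Hn0 : forall P dw t, 2 * eps ^ 2 < D01 xiL xiN a b sw2 n P dw t -> 0 < INR n).
{ intros P dw t HD. destruct n.
  - unfold D01 in HD. simpl in HD. lra.
  - apply lt_0_INR. lia. }
assert (HDmono : forall P1 dw1 t1 P2 dw2 t2, 0 <= Pbar xiL xiN a b P1 dw1 t1 ->
  Pbar xiL xiN a b P1 dw1 t1 <= Pbar xiL xiN a b P2 dw2 t2 ->
  D01 xiL xiN a b sw2 n P1 dw1 t1 <= D01 xiL xiN a b sw2 n P2 dw2 t2).
{ intros. rewrite !D01_Gs. apply Rmult_le_compat_l.
  - assert (0 <= INR n) by apply pos_INR. lra.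
  - apply Gs_mono; lra. }
assert (HDstrict : 0 < INR n -> forall P1 dw1 t1 P2 dw2 t2, 0 < Pbar xiL xiN a b P1 dw1 t1 ->
  Pbar xiL xiN a b P1 dw1 t1 < Pbar xiL xiN a b P2 dw2 t2 ->
  D01 xiL xiN a b sw2 n P1 dw1 t1 < D01 xiL xiN a b sw2 n P2 dw2 t2).
{ intros. rewrite !D01_Gs. apply Rmult_lt_compat_l.
  - lra.
  - apply Gs_strict; lra. }
assert (Hhp := fun dw t => hf_pos xiL xiN a b dw t Ha).
assert (Hfp := fun dw t => f_pos xiL a b L dw t Ha).
split; [|split; [|split]].
-
  intros HO HD. split.
  + repeat split; try lra.
  + intros P' dw' t' Hf'. destruct (Hfeas _ _ _ Hf') as [te [Hte [Htel Hle]]].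
    destruct Hf' as [_ [HP' [Hd' Ht']]].
    assert (f_gain xiL a b L du te <= f_gain xiL a b L du thl).
    { apply (F_right xiL a b L du thO thl te); try lra. apply HF; lra. }
    apply Hgam. apply Rmult_le_compat; try lra. apply Rlt_le, Hfp.
-
  intros Peps HPe HDe _ HO HD.
  assert (Hn := Hn0 _ _ _ HD).
  assert (HPeps : Peps <= Pm).
  { destruct (Rle_lt_dec Peps Pm) as [|Hlt]; [assumption|].
    assert (D01 xiL xiN a b sw2 n Pm du thl <= D01 xiL xiN a b sw2 n Peps du thl).
    { apply HDmono; rewrite !Pbar_hf.
      - apply Rmult_le_pos; [lra|apply Rlt_le, Hhp].
      - apply Rmult_le_compat_r; [apply Rlt_le, Hhp|lra]. }
    lra. }
  split.
  + repeat split; try lra.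
  + intros P' dw' t' Hf'. destruct (Hfeas _ _ _ Hf') as [te [Hte [Htel Hle]]].
    destruct Hf' as [HD' [HP' [Hd' Ht']]].
    assert (f_gain xiL a b L du te <= f_gain xiL a b L du thl).
    { apply (F_right xiL a b L du thO thl te); try lra. apply HF; lra. }
    assert (HPb : Pbar xiL xiN a b P' dw' t' <= Pbar xiL xiN a b Peps du thl).
    { destruct (Rle_lt_dec (Pbar xiL xiN a b P' dw' t') (Pbar xiL xiN a b Peps du thl)) as [|Hlt]; [assumption|].
      assert (D01 xiL xiN a b sw2 n Peps du thl < D01 xiL xiN a b sw2 n P' dw' t').
      { apply HDstrict; try assumption. rewrite Pbar_hf. apply Rmult_lt_0_compat; [lra|apply Hhp]. }
      lra. }
    rewrite !Pbar_hf in HPb.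
    assert (hf xiL xiN a b du thl <= hf xiL xiN a b dw' t') by (apply hf_mono; lra).
    assert (HPP : P' <= Peps).
    { assert (P' * hf xiL xiN a b du thl <= Peps * hf xiL xiN a b du thl).
      { assert (P' * hf xiL xiN a b du thl <= P' * hf xiL xiN a b dw' t') by (apply Rmult_le_compat_l; lra). lra. }
      apply Rmult_le_reg_r in H1; [assumption|apply Hhp]. }
    apply Hgam. apply Rmult_le_compat; try lra. apply Rlt_le, Hfp.
-
  intros HO HD. split.
  + repeat split; try lra.
  + intros P' dw' t' Hf'. destruct (Hfeas _ _ _ Hf') as [te [Hte [Htel Hle]]].
    destruct Hf' as [_ [HP' [Hd' Ht']]].
    assert (f_gain xiL a b L du te <= f_gain xiL a b L du thO) by (apply HF; lra).
    apply Hgam. apply Rmult_le_compat; try lra. apply Rlt_le, Hfp.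
-
  intros thEps Pj thj HDE _ feas2 Hfj Hmax _ HO HD.
  assert (Hn := Hn0 _ _ _ HD).
  set (h := hf xiL xiN a b) in *.
  set (cP := Pm * h du thEps).
  assert (HcP : 0 < cP) by (apply Rmult_lt_0_compat; [lra|apply Hhp]).
  assert (HEO : thEps < thO).
  { destruct (Rlt_le_dec thEps thO) as [|Hge]; [assumption|].
    assert (D01 xiL xiN a b sw2 n Pm du thO <= D01 xiL xiN a b sw2 n Pm du thEps).
    { apply HDmono; rewrite !Pbar_hf; fold h.
      - apply Rmult_le_pos; [lra|apply Rlt_le, Hhp].
      - apply Rmult_le_compat_l; [lra|]. unfold h. apply hf_mono; lra. }
    lra. }
  set (T := Rmax thl thEps).
  assert (HT1 : thl <= T) by apply Rmax_l.
  assert (HT2 : thEps <= T) by apply Rmax_r.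
  assert (HT3 : T <= thO) by (apply Rmax_lub; lra).
  assert (Hfs : forall th, T <= th <= thO -> feas2 (cP / h du th) th).
  { intros th Hth. unfold feas2. split; [|split].
    - rewrite <- HDE. rewrite !D01_Gs, !Pbar_hf. fold h. f_equal. f_equal.
      unfold cP. field. apply Rgt_not_eq, Hhp.
    - assert (h du thEps <= h du th) by (unfold h; apply hf_mono; lra).
      assert (Hh := Hhp du th).
      apply Rmult_le_reg_r with (h du th); [lra|].
      replace (cP / h du th * h du th) with cP by (field; lra).
      unfold cP. apply Rmult_le_compat_l; lra.
    - fold T. lra. }
  assert (Hbest : forall th, T <= th <= thO ->
     (cP / h du th) * f_gain xiL a b L du th <= Pj * f_gain xiL a b L du thj).
  { intros th Hth. assert (Hg := Hmax _ _ (Hfs th Hth)). unfold gamma_b in Hg.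
    apply Rmult_le_reg_r with (/ sb2); [apply Rinv_0_lt_compat; lra|]. lra. }
  destruct Hfj as [HDj [HPj Hthj]]. fold T in Hthj.
  assert (HPj0 : 0 < Pj).
  { assert (H1 := Hbest thO ltac:(lra)).
    assert (0 < cP / h du thO) by (apply Rdiv_lt_0_compat; [lra|apply Hhp]).
    assert (0 < cP / h du thO * f_gain xiL a b L du thO) by (apply Rmult_lt_0_compat; [lra|apply Hfp]).
    destruct (Rlt_le_dec 0 Pj) as [|Hle]; [assumption|].
    assert (Pj * f_gain xiL a b L du thj <= 0).
    { assert (H4 := Hfp du thj). nra. }
    lra. }
  split.
  + repeat split; try lra.
  + intros P' dw' t' Hf'. destruct (Hfeas _ _ _ Hf') as [te [Hte [Htel Hle]]].
    destruct Hf' as [HD' [HP' [Hd' Ht']]].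
    assert (HPb : Pbar xiL xiN a b P' dw' t' <= cP).
    { destruct (Rle_lt_dec (Pbar xiL xiN a b P' dw' t') cP) as [|Hlt]; [assumption|].
      assert (D01 xiL xiN a b sw2 n Pm du thEps < D01 xiL xiN a b sw2 n P' dw' t').
      { apply HDstrict; try assumption; rewrite Pbar_hf; fold h.
        - apply Rmult_lt_0_compat; [lra|apply Hhp].
        - rewrite Pbar_hf. rewrite Pbar_hf in Hlt. exact Hlt. }
      lra. }
    rewrite Pbar_hf in HPb. fold h in HPb.
    assert (HPle : forall th, th <= t' -> P' <= cP / h du th).
    { intros th Hth. assert (h du th <= h dw' t') by (unfold h; apply hf_mono; lra).
      assert (Hh := Hhp du th).
      apply Rmult_le_reg_r with (h du th); [lra|].
      replace (cP / h du th * h du th) with cP by (field; lra).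
      assert (P' * h du th <= P' * h dw' t') by (apply Rmult_le_compat_l; lra). lra. }
    assert (Hf0 := Hfp dw' t').
    apply Hgam.
    destruct (Rle_lt_dec te T) as [HteT|HteT]; [|destruct (Rle_lt_dec te thO) as [HteO|HteO]].
    *
      assert (f_gain xiL a b L du te <= f_gain xiL a b L du T).
      { apply (F_left xiL a b L du te T thO); try lra. apply HF; lra. }
      assert (P' <= cP / h du T).
      { unfold T. destruct (Rle_lt_dec thl thEps) as [Hl|Hl].
        - rewrite Rmax_right by lra. replace (cP / h du thEps) with Pm.
          + lra.
          + unfold cP. field. apply Rgt_not_eq, Hhp.
        - rewrite Rmax_left by lra. apply HPle. lra. }
      eapply Rle_trans; [|apply (Hbest T); lra].
      apply Rmult_le_compat; lra.
    *
      assert (P' <= cP / h du te) by (apply HPle; lra).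
      eapply Rle_trans; [|apply (Hbest te); lra].
      apply Rmult_le_compat; lra.
    *
      assert (f_gain xiL a b L du te <= f_gain xiL a b L du thO) by (apply HF; lra).
      assert (P' <= cP / h du thO) by (apply HPle; lra).
      eapply Rle_trans; [|apply (Hbest thO); lra].
      apply Rmult_le_compat; lra.
Qed.
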